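(* Let $\tau_1,\tau_2\in\mathcal{T}$ be such that $(\mathbb{R},\tau_1)$ and $(\mathbb{R},\tau_2)$ are locally connected. (a) If $(\mathbb{R},\tau_1)$ is separable and $(\mathbb{R},\tau_2)$ is not discrete, then $(\mathbb{R},\tau_1)$ is homeomorphic to a subspace of $(\mathbb{R},\tau_2)$. (b) If $(\mathbb{R},\tau_2)$ is neither separable nor discrete, then $(\mathbb{R},\tau_1)$ is homeomorphic to a subspace of $(\mathbb{R},\tau_2)$.
   Context: $\eta$ denotes the Euclidean topology on $\mathbb{R}$; $\mathcal{T}$ is the family of all topologies on $\mathbb{R}$ finer than $\eta$. *)

(* Defs.v *)
From Stdlib Require Import Reals Rtopology.
Open Scope R_scope.

Record is_topology (tau : (R -> Prop) -> Prop) : Prop := {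
  top_ext : forall U V : R -> Prop, (forall x, U x <-> V x) -> tau U -> tau V;
  top_empty : tau (fun _ => False);
  top_full : tau (fun _ => True);
  top_inter : forall U V, tau U -> tau V -> tau (fun x => U x /\ V x);
  top_union : forall F : (R -> Prop) -> Prop,
      (forall U, F U -> tau U) -> tau (fun x => exists U, F U /\ U x)
}.

Definition finer_than_euclidean (tau : (R -> Prop) -> Prop) : Prop :=
  forall U : R -> Prop, open_set U -> tau U.

Definition in_calT (tau : (R -> Prop) -> Prop) : Prop :=
  is_topology tau /\ finer_than_euclidean tau.

Definition connected_in (tau : (R -> Prop) -> Prop) (A : R -> Prop) : Prop :=
  ~ exists U V : R -> Prop,
      tau U /\ tau V /\
      (forall x, A x -> U x \/ V x) /\
      (exists x, A x /\ U x) /\ (exists x, A x /\ V x) /\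
      (forall x, A x -> U x -> V x -> False).

Definition locally_connected (tau : (R -> Prop) -> Prop) : Prop :=
  forall (x : R) (U : R -> Prop), tau U -> U x ->
    exists V : R -> Prop, tau V /\ V x /\ (forall y, V y -> U y) /\ connected_in tau V.

Definition countable_set (D : R -> Prop) : Prop :=
  exists f : nat -> R, forall x, D x -> exists n, f n = x.

Definition separable (tau : (R -> Prop) -> Prop) : Prop :=
  exists D : R -> Prop, countable_set D /\
    (forall U, tau U -> (exists x, U x) -> exists x, U x /\ D x).

Definition discrete (tau : (R -> Prop) -> Prop) : Prop :=
  forall x : R, tau (fun y => y = x).

(* (R,tau1) is homeomorphic to a subspace of (R,tau2): an injective map f
   that is continuous and open onto its image f(R) with the subspace topology. *)
Definition embeds_into (tau1 tau2 : (R -> Prop) -> Prop) : Prop :=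
  exists f : R -> R,
    (forall x y, f x = f y -> x = y) /\
    (forall W, tau2 W -> tau1 (fun x => W (f x))) /\
    (forall U, tau1 U -> exists W, tau2 W /\ forall x, U x <-> W (f x)).

(* Main.v *)
Require Import Defs.
From Stdlib Require Import Reals Rtopology.
From Stdlib Require Import Lra Lia ZArith ClassicalEpsilon Classical Cantor.
From Coquelicot Require Import Coquelicot.
Open Scope R_scope.

Definition iso (tau : (R->Prop)->Prop) x := tau (fun y => y = x).
Definition RO (tau : (R->Prop)->Prop) x := exists U, tau U /\ U x /\ forall y, U y -> x <= y.
Definition LO (tau : (R->Prop)->Prop) x := exists U, tau U /\ U x /\ forall y, U y -> y <= x.

Lemma mk_open (D : R -> Prop) :
  (forall x, D x -> exists d, 0 < d /\ forall y, Rabs (y - x) < d -> D y) -> open_set D.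
Proof.
  intros H x Hx. destruct (H x Hx) as [d [Hd Hy]].
  exists (mkposreal d Hd). intros y Hy'. apply Hy. exact Hy'.
Qed.

Lemma eopen tau (D : R -> Prop) : in_calT tau ->
  (forall x, D x -> exists d, 0 < d /\ forall y, Rabs (y - x) < d -> D y) -> tau D.
Proof. intros [_ Hf] H. apply Hf. apply mk_open. exact H. Qed.

Lemma text tau (U V : R -> Prop) : in_calT tau -> tau U -> (forall x, U x <-> V x) -> tau V.
Proof. intros [Ht _] HU H. exact (top_ext _ Ht U V H HU). Qed.

Lemma tinter tau U V : in_calT tau -> tau U -> tau V -> tau (fun x => U x /\ V x).
Proof. intros [Ht _] HU HV. exact (top_inter _ Ht U V HU HV). Qed.

Lemma open_local tau (P : R -> Prop) : in_calT tau ->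
  (forall x, P x -> exists V, tau V /\ V x /\ forall y, V y -> P y) -> tau P.
Proof.
  intros HT H. destruct HT as [Ht Hf].
  pose (F := fun V : R -> Prop => tau V /\ forall y, V y -> P y).
  assert (tau (fun x => exists U, F U /\ U x)) as HU.
  { apply (top_union _ Ht). intros U [HU _]. exact HU. }
  refine (top_ext _ Ht _ _ _ HU). intros x; split.
  - intros [U [[_ HUP] HUx]]. exact (HUP x HUx).
  - intros Px. destruct (H x Px) as [V [HV [Vx HVP]]]. exists V. split; [split|]; auto.
Qed.

Lemma tunion2 tau U V : in_calT tau -> tau U -> tau V -> tau (fun x => U x \/ V x).
Proof.
  intros HT HU HV. apply open_local; auto. intros x [Ux|Vx].
  - exists U. split; auto.
  - exists V. split; auto.
Qed.

Lemma open_lt tau c : in_calT tau -> tau (fun y => y < c).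
Proof.
  intros HT. apply eopen; auto. intros x Hx. exists (c - x). split; [lra|].
  intros y Hy. apply Rabs_def2 in Hy. lra.
Qed.

Lemma open_gt tau c : in_calT tau -> tau (fun y => c < y).
Proof.
  intros HT. apply eopen; auto. intros x Hx. exists (x - c). split; [lra|].
  intros y Hy. apply Rabs_def2 in Hy. lra.
Qed.

Lemma open_neq tau c : in_calT tau -> tau (fun y => y <> c).
Proof.
  intros HT. apply tunion2 with (U := fun y => y < c) (V := fun y => c < y) in HT as H;
    [| apply open_lt; auto | apply open_gt; auto].
  eapply text; eauto. intros x; split; intros H'; [intros ->; lra|].
  destruct (Rtotal_order x c) as [h|[h|h]]; auto; contradiction.
Qed.

Lemma open_itv tau a b : in_calT tau -> tau (fun y => a < y < b).
Proof.
  intros HT. exact (tinter tau _ _ HT (open_gt tau a HT) (open_lt tau b HT)).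
Qed.

Lemma conn_interval tau A a b c : in_calT tau -> connected_in tau A -> A a -> A b ->
  a < c < b -> A c.
Proof.
  intros HT HA Ha Hb Hc. apply NNPP. intros Hnc. apply HA.
  exists (fun y => y < c), (fun y => c < y).
  split; [apply open_lt; auto|]. split; [apply open_gt; auto|].
  split. { intros y Hy. destruct (Rtotal_order y c) as [h|[h|h]]; auto. subst; contradiction. }
  split. { exists a. split; auto; lra. }
  split. { exists b. split; auto; lra. }
  intros y _ h1 h2. lra.
Qed.

Lemma conn_RO tau x V : in_calT tau -> RO tau x -> connected_in tau V -> V x ->
  forall y, V y -> x <= y.
Proof.
  intros HT [U0 [HU0 [U0x HU0r]]] HV Vx y Vy. apply Rnot_lt_le. intros Hyx. apply HV.
  exists (fun z => z < x), (fun z => U0 z \/ x < z).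
  split; [apply open_lt; auto|]. split; [apply tunion2; auto; apply open_gt; auto|].
  split. { intros z Hz. destruct (Rtotal_order z x) as [h|[h|h]]; auto. subst; auto. }
  split. { exists y. split; auto. }
  split. { exists x. split; auto. }
  intros z _ h1 [h2|h2]; [apply HU0r in h2|]; lra.
Qed.

Lemma conn_LO tau x V : in_calT tau -> LO tau x -> connected_in tau V -> V x ->
  forall y, V y -> y <= x.
Proof.
  intros HT [U0 [HU0 [U0x HU0r]]] HV Vx y Vy. apply Rnot_lt_le. intros Hyx. apply HV.
  exists (fun z => x < z), (fun z => U0 z \/ z < x).
  split; [apply open_gt; auto|]. split; [apply tunion2; auto; apply open_lt; auto|].
  split. { intros z Hz. destruct (Rtotal_order z x) as [h|[h|h]]; auto. subst; auto. }
  split. { exists y. split; auto. }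
  split. { exists x. split; auto. }
  intros z _ h1 [h2|h2]; [apply HU0r in h2|]; lra.
Qed.

Lemma conn_iso tau V x y : in_calT tau -> connected_in tau V -> V x -> V y -> iso tau y -> x = y.
Proof.
  intros HT HV Vx Vy Hy. apply NNPP. intros Hxy. apply HV.
  exists (fun z => z = y), (fun z => z <> y).
  split; auto. split; [apply open_neq; auto|].
  split. { intros z _. destruct (classic (z = y)); auto. }
  split. { exists y; auto. } split. { exists x; auto. }
  intros z _ h1 h2; auto.
Qed.

Lemma lc_nbhd tau U x : in_calT tau -> locally_connected tau -> tau U -> U x -> ~ iso tau x ->
  exists V, tau V /\ V x /\ (forall y, V y -> U y) /\ connected_in tau V /\ exists y, V y /\ y <> x.
Proof.
  intros HT HL HU Ux Hi. destruct (HL x U HU Ux) as [V [HV [Vx [VU Vc]]]].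
  exists V. repeat split; auto. apply NNPP. intros Hn. apply Hi.
  apply (text tau V); auto. intros z; split; intros Hz.
  - apply NNPP. intros Hz'. apply Hn. exists z; auto.
  - subst; auto.
Qed.

Lemma RO_LO_iso tau x : in_calT tau -> RO tau x -> LO tau x -> iso tau x.
Proof.
  intros HT [U [HU [Ux HUr]]] [V [HV [Vx HVl]]]. apply (text tau _ _ HT (tinter tau U V HT HU HV)).
  intros z; split; [intros [h1 h2]; apply HUr in h1; apply HVl in h2; lra| intros ->; auto].
Qed.

Lemma RO_base tau x U : in_calT tau -> locally_connected tau -> RO tau x -> ~ iso tau x ->
  tau U -> U x -> exists e, 0 < e /\ forall y, x <= y < x + e -> U y.
Proof.
  intros HT HL HR Hi HU Ux. destruct (lc_nbhd tau U x HT HL HU Ux Hi) as [V [HV [Vx [VU [Vc [y [Vy Hyx]]]]]]].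
  pose proof (conn_RO tau x V HT HR Vc Vx) as Hr. pose proof (Hr y Vy).
  exists (y - x). split; [lra|]. intros z Hz. apply VU.
  destruct (Req_dec z x) as [->|Hzx]; auto. eapply (conn_interval tau V x y); eauto. lra.
Qed.

Lemma LO_base tau x U : in_calT tau -> locally_connected tau -> LO tau x -> ~ iso tau x ->
  tau U -> U x -> exists e, 0 < e /\ forall y, x - e < y <= x -> U y.
Proof.
  intros HT HL HR Hi HU Ux. destruct (lc_nbhd tau U x HT HL HU Ux Hi) as [V [HV [Vx [VU [Vc [y [Vy Hyx]]]]]]].
  pose proof (conn_LO tau x V HT HR Vc Vx) as Hr. pose proof (Hr y Vy).
  exists (x - y). split; [lra|]. intros z Hz. apply VU.
  destruct (Req_dec z x) as [->|Hzx]; auto. eapply (conn_interval tau V y x); eauto. lra.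
Qed.

Lemma E_base tau x U : in_calT tau -> locally_connected tau -> ~ RO tau x -> ~ LO tau x -> ~ iso tau x ->
  tau U -> U x -> exists e, 0 < e /\ forall y, Rabs (y - x) < e -> U y.
Proof.
  intros HT HL HR HLo Hi HU Ux. destruct (HL x U HU Ux) as [V [HV [Vx [VU Vc]]]].
  assert (exists y1, V y1 /\ y1 < x) as [y1 [V1 H1]].
  { apply NNPP. intros Hn. apply HR. exists V. repeat split; auto. intros y Vy.
    apply Rnot_lt_le. intros h. apply Hn. exists y; auto. }
  assert (exists y2, V y2 /\ x < y2) as [y2 [V2 H2]].
  { apply NNPP. intros Hn. apply HLo. exists V. repeat split; auto. intros y Vy.
    apply Rnot_lt_le. intros h. apply Hn. exists y; auto. }
  exists (Rmin (x - y1) (y2 - x)). split. { apply Rmin_glb_lt; lra. }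
  intros y Hy. apply Rabs_def2 in Hy. destruct Hy as [Hy1 Hy2].
  pose proof (Rmin_l (x - y1) (y2 - x)). pose proof (Rmin_r (x - y1) (y2 - x)).
  apply VU. destruct (Req_dec y x) as [->|Hyx]; auto. eapply (conn_interval tau V y1 y2); eauto. lra.
Qed.

Lemma noniso_nbhd tau x : in_calT tau -> locally_connected tau -> ~ iso tau x ->
  exists V, tau V /\ V x /\ connected_in tau V /\ forall y, V y -> ~ iso tau y.
Proof.
  intros HT HL Hi. destruct HT as [Ht Hf] eqn:E.
  destruct (HL x (fun _ => True) (top_full _ Ht) I) as [V [HV [Vx [_ Vc]]]].
  exists V. repeat split; auto. intros y Vy Hy. pose proof (conn_iso tau V x y HT Vc Vx Vy Hy).
  subst; auto.
Qed.


Definition qs (n : nat) : R :=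
  let (i, r) := Cantor.of_nat n in let (k, l) := Cantor.of_nat r in (INR i - INR k) / 2 ^ l.

Lemma INR_lt_pow2 n : INR n < 2 ^ n.
Proof.
  induction n. { simpl; lra. }
  rewrite S_INR. simpl. assert (1 <= 2 ^ n) by (apply pow_R1_Rle; lra). lra.
Qed.

Lemma IZR_nat_diff z : IZR z = INR (Z.to_nat z) - INR (Z.to_nat (- z)).
Proof.
  destruct z as [|p|p]; simpl.
  - lra.
  - rewrite INR_IPR. unfold IZR. lra.
  - rewrite INR_IPR. unfold IZR. lra.
Qed.

Lemma qs_dense a b : a < b -> exists n, a < qs n < b.
Proof.
  intros Hab. destruct (archimed (/ (b - a))) as [HN _].
  set (N := Z.to_nat (up (/ (b - a)))).
  assert (HN' : / (b - a) < INR N).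
  { unfold N. destruct (Z_lt_le_dec (up (/ (b - a))) 0) as [h|h].
    - assert (0 < / (b - a)) by (apply Rinv_0_lt_compat; lra).
      apply IZR_lt in h. lra.
    - rewrite INR_IZR_INZ. rewrite Z2Nat.id; auto. }
  pose proof (INR_lt_pow2 N) as HP.
  assert (Hpos : 0 < 2 ^ N) by (apply pow_lt; lra).
  assert (Hsm : 1 < (b - a) * 2 ^ N).
  { assert (0 < b - a) by lra.
    apply Rmult_lt_reg_l with (/ (b - a)). apply Rinv_0_lt_compat; lra.
    rewrite <- Rmult_assoc, Rinv_l by lra. lra. }
  set (z := up (a * 2 ^ N)). destruct (archimed (a * 2 ^ N)) as [H1 H2]. fold z in H1, H2.
  exists (Cantor.to_nat (Z.to_nat z, Cantor.to_nat (Z.to_nat (- z), N))).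
  unfold qs. rewrite Cantor.cancel_of_to. rewrite Cantor.cancel_of_to.
  rewrite <- IZR_nat_diff. split.
  - apply Rmult_lt_reg_r with (2 ^ N); auto. unfold Rdiv. rewrite Rmult_assoc, Rinv_l by lra. lra.
  - apply Rmult_lt_reg_r with (2 ^ N); auto. unfold Rdiv. rewrite Rmult_assoc, Rinv_l by lra. lra.
Qed.

Lemma cnt_sub (D E : R -> Prop) : (forall x, D x -> E x) -> countable_set E -> countable_set D.
Proof. intros H [f Hf]. exists f. intros x Dx. apply Hf, H, Dx. Qed.

Lemma cnt_union (P : nat -> nat -> Prop) (S : nat -> nat -> R -> Prop) :
  (forall i j, P i j -> countable_set (S i j)) ->
  countable_set (fun x => exists i j, P i j /\ S i j x).
Proof.
  intros H.
  assert (H' : forall i j, exists e : nat -> R, P i j -> forall x, S i j x -> exists n, e n = x).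
  { intros i j. destruct (classic (P i j)) as [Hp|Hp].
    - destruct (H i j Hp) as [e He]. exists e. auto.
    - exists (fun _ => 0). intros; contradiction. }
  set (E := fun i j => proj1_sig (constructive_indefinite_description _ (H' i j))).
  exists (fun n => let (i, r) := Cantor.of_nat n in let (j, k) := Cantor.of_nat r in E i j k).
  intros x [i [j [Hp Hs]]].
  destruct (proj2_sig (constructive_indefinite_description _ (H' i j)) Hp x Hs) as [k Hk].
  exists (Cantor.to_nat (i, Cantor.to_nat (j, k))).
  rewrite Cantor.cancel_of_to, Cantor.cancel_of_to. exact Hk.
Qed.

Lemma cnt_union3 (A B : R -> Prop) c : countable_set A -> countable_set B ->
  countable_set (fun x => A x \/ B x \/ x = c).
Proof.
  intros [f Hf] [g Hg].
  exists (fun n => let (i, k) := Cantor.of_nat n in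
     match i with 0%nat => f k | 1%nat => g k | _ => c end).
  intros x [Ax|[Bx|Ex]].
  - destruct (Hf x Ax) as [k Hk]. exists (Cantor.to_nat (0%nat, k)). rewrite Cantor.cancel_of_to. auto.
  - destruct (Hg x Bx) as [k Hk]. exists (Cantor.to_nat (1%nat, k)). rewrite Cantor.cancel_of_to. auto.
  - exists (Cantor.to_nat (2%nat, 0%nat)). rewrite Cantor.cancel_of_to. auto.
Qed.

Lemma index_inj (S : R -> Prop) (I : R -> R -> Prop) :
  (forall h, S h -> exists a b, a < b /\ forall x, a < x < b -> I h x) ->
  (forall h h' x, S h -> S h' -> I h x -> I h' x -> h = h') ->
  exists k : R -> nat, forall h h', S h -> S h' -> k h = k h' -> h = h'.
Proof.
  intros H1 H2.
  assert (H : forall h, exists n, S h -> I h (qs n)).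
  { intros h. destruct (classic (S h)) as [Sh|Sh].
    - destruct (H1 h Sh) as [a [b [Hab Hi]]]. destruct (qs_dense a b Hab) as [n Hn].
      exists n. intros _. apply Hi; auto.
    - exists 0%nat. intros; contradiction. }
  exists (fun h => proj1_sig (constructive_indefinite_description _ (H h))).
  intros h h' Sh Sh' Heq.
  pose proof (proj2_sig (constructive_indefinite_description _ (H h)) Sh) as A.
  pose proof (proj2_sig (constructive_indefinite_description _ (H h')) Sh') as B.
  simpl in *. rewrite Heq in A. eapply H2; eauto.
Qed.


Definition ind (P : Prop) : R := if excluded_middle_informative P then 1 else 0.
Lemma ind_1 (P : Prop) : P -> ind P = 1.
Proof. unfold ind; destruct excluded_middle_informative; tauto. Qed.
Lemma ind_0 (P : Prop) : ~ P -> ind P = 0.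
Proof. unfold ind; destruct excluded_middle_informative; tauto. Qed.
Lemma ind_b (P : Prop) : 0 <= ind P <= 1.
Proof. unfold ind; destruct excluded_middle_informative; lra. Qed.
Lemma ind_mono (P Q : Prop) : (P -> Q) -> ind P <= ind Q.
Proof. unfold ind; do 2 destruct excluded_middle_informative; try lra; tauto. Qed.
Lemma ind_eq (P Q : Prop) : (P <-> Q) -> ind P = ind Q.
Proof. unfold ind; do 2 destruct excluded_middle_informative; try lra; tauto. Qed.

Lemma atan_cont x e : 0 < e -> exists d, 0 < d /\ forall y, Rabs (y - x) < d -> Rabs (atan y - atan x) < e.
Proof.
  intros He. pose proof (derivable_continuous_pt atan x (derivable_pt_atan x)) as H.
  destruct (H e He) as [d [Hd Hy]]. exists d. split; auto. intros y Hyx.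
  destruct (Req_dec y x) as [->|Hne]. { rewrite Rminus_diag, Rabs_R0; auto. }
  apply (Hy y). split. { split; [exact I| intro; apply Hne; auto]. } simpl. unfold R_dist. auto.
Qed.

Lemma geom_ex : ex_series (fun n => 2 * (/2) ^ n).
Proof.
  apply (ex_series_scal_l (V := R_NormedModule) 2 (fun n => (/2)^n)).
  apply ex_series_geom. rewrite Rabs_pos_eq; lra.
Qed.

Lemma geom_S : Series (fun n => 2 * (/2) ^ n) = 4.
Proof. rewrite Series_scal_l, Series_geom; [lra|]. rewrite Rabs_pos_eq; lra. Qed.

Lemma ex_dom (a : nat -> R) : (forall n, 0 <= a n <= 2 * (/2)^n) -> ex_series a.
Proof.
  intros H. apply (ex_series_le (V := R_CompleteNormedModule) a (fun n => 2 * (/2)^n)); [|apply geom_ex].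
  intros n. change (norm (a n)) with (Rabs (a n)). rewrite Rabs_pos_eq; apply H.
Qed.

Lemma Series_nonneg (a : nat -> R) : (forall n, 0 <= a n <= 2 * (/2)^n) -> 0 <= Series a.
Proof.
  intros H. assert (Series (fun _ => 0) = 0) as E.
  { transitivity (Series (fun n => 0 * (/2)^n)); [apply Series_ext; intros; lra|].
    rewrite Series_scal_l; lra. }
  rewrite <- E. apply Series_le; [|apply ex_dom; auto]. intros n; split; [lra| apply H].
Qed.

Lemma pow_half_le1 n : 0 < (/2)^n <= 1.
Proof. induction n; simpl; lra. Qed.

Lemma Series_term (a : nat -> R) k : (forall n, 0 <= a n <= 2 * (/2)^n) -> a k <= Series a.
Proof.
  intros H. rewrite (Series_incr_n a (S k)); [|lia|apply ex_dom; auto].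
  simpl pred. assert (0 <= Series (fun j => a (S k + j)%nat)).
  { apply Series_nonneg. intros n. split; [apply H|]. pose proof (H (S k + n)%nat).
    rewrite pow_add in H0. pose proof (pow_half_le1 (S k)).
    assert (0 <= (/2)^n) by (apply pow_le; lra). nra. }
  destruct k. { simpl in *. lra. }
  simpl in *. assert (0 <= sum_f_R0 a k) by (apply cond_pos_sum; intros; apply H). lra.
Qed.

Lemma Series_tail (a : nat -> R) N : (forall n, 0 <= a n <= 2 * (/2)^n) ->
  (forall n, (n < N)%nat -> a n = 0) -> Series a <= 4 * (/2)^N.
Proof.
  intros H HN. rewrite (Series_incr_n_aux a N HN).
  replace (4 * (/2)^N) with ((/2)^N * Series (fun n => 2 * (/2)^n)) by (rewrite geom_S; lra).
  rewrite <- Series_scal_l. apply Series_le.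
  - intros n. split; [apply H|]. pose proof (H (N + n)%nat) as [_ h]. rewrite pow_add in h. lra.
  - apply (ex_series_scal_l (V := R_NormedModule) ((/2)^N)). apply geom_ex.
Qed.

Lemma INR_lt_pow2' n : INR n < 2 ^ n.
Proof.
  induction n. { simpl; lra. }
  rewrite S_INR. simpl. assert (1 <= 2 ^ n) by (apply pow_R1_Rle; lra). lra.
Qed.

Lemma small_pow e : 0 < e -> exists N, 4 * (/2)^N < e.
Proof.
  intros He. destruct (archimed (4 / e)) as [H _].
  set (N := Z.to_nat (up (4 / e))). exists N.
  assert (HN : 4 / e < INR N).
  { unfold N. destruct (Z_lt_le_dec (up (4 / e)) 0) as [h|h].
    - assert (0 < 4 / e) by (apply Rdiv_lt_0_compat; lra). apply IZR_lt in h. lra.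
    - rewrite INR_IZR_INZ. rewrite Z2Nat.id; auto. }
  pose proof (INR_lt_pow2' N). rewrite pow_inv.
  assert (0 < 2 ^ N) by (apply pow_lt; lra).
  set (P := 2 ^ N) in *. assert (4 / e < P) by lra.
  assert (4 < e * P). { apply Rmult_lt_reg_l with (/ e). apply Rinv_0_lt_compat; lra.
    replace (/ e * (e * P)) with P by (field; lra). unfold Rdiv in *. lra. }
  apply Rmult_lt_reg_r with P; auto. replace (4 * / P * P) with 4 by (field; lra). lra.
Qed.

Definition injon (S : R -> Prop) (k : R -> nat) := forall h h', S h -> S h' -> k h = k h' -> h = h'.

Definition cc (SR SL : R -> Prop) (kR kL : R -> nat) (x : R) (n : nat) : R :=
  (/2)^n * (ind (exists h, SR h /\ kR h = n /\ h <= x) + ind (exists h, SL h /\ kL h = n /\ h < x)).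
Definition phi0 SR SL kR kL x := atan x + Series (cc SR SL kR kL x).

Lemma cc_b SR SL kR kL x n : 0 <= cc SR SL kR kL x n <= 2 * (/2)^n.
Proof.
  unfold cc. pose proof (pow_half_le1 n). pose proof (ind_b (exists h, SR h /\ kR h = n /\ h <= x)).
  pose proof (ind_b (exists h, SL h /\ kL h = n /\ h < x)). nra.
Qed.

Lemma cc_mono SR SL kR kL x y n : x <= y -> cc SR SL kR kL x n <= cc SR SL kR kL y n.
Proof.
  intros Hxy. unfold cc. pose proof (pow_half_le1 n).
  assert (ind (exists h, SR h /\ kR h = n /\ h <= x) <= ind (exists h, SR h /\ kR h = n /\ h <= y)).
  { apply ind_mono. intros [h [? [? ?]]]. exists h. repeat split; auto; lra. }
  assert (ind (exists h, SL h /\ kL h = n /\ h < x) <= ind (exists h, SL h /\ kL h = n /\ h < y)).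
  { apply ind_mono. intros [h [? [? ?]]]. exists h. repeat split; auto; lra. }
  nra.
Qed.

Lemma dcc_b SR SL kR kL x y : x <= y -> forall n,
  0 <= cc SR SL kR kL y n - cc SR SL kR kL x n <= 2 * (/2)^n.
Proof.
  intros Hxy n. pose proof (cc_mono SR SL kR kL x y n Hxy).
  pose proof (cc_b SR SL kR kL x n). pose proof (cc_b SR SL kR kL y n). lra.
Qed.

Lemma phi0_diff SR SL kR kL x y : x <= y ->
  phi0 SR SL kR kL y - phi0 SR SL kR kL x =
  atan y - atan x + Series (fun n => cc SR SL kR kL y n - cc SR SL kR kL x n).
Proof.
  intros Hxy. unfold phi0. rewrite Series_minus; [lra| |]; apply ex_dom; intros; apply cc_b.
Qed.

Lemma phi0_strict SR SL kR kL x y : x < y -> phi0 SR SL kR kL x < phi0 SR SL kR kL y.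
Proof.
  intros Hxy. assert (phi0 SR SL kR kL y - phi0 SR SL kR kL x > 0); [|lra].
  rewrite phi0_diff by lra. pose proof (atan_increasing x y Hxy).
  pose proof (Series_nonneg _ (dcc_b SR SL kR kL x y (Rlt_le _ _ Hxy))). lra.
Qed.

Lemma phi0_le SR SL kR kL x y : x <= y -> phi0 SR SL kR kL x <= phi0 SR SL kR kL y.
Proof.
  intros [h| ->]; [apply Rlt_le, phi0_strict; auto| lra].
Qed.

Lemma phi0_bounds SR SL kR kL x : -2 < phi0 SR SL kR kL x < 6.
Proof.
  unfold phi0. pose proof (atan_bound x). pose proof PI_4.
  pose proof (Series_nonneg _ (cc_b SR SL kR kL x)).
  pose proof (Series_tail _ 0 (cc_b SR SL kR kL x) (fun n h => ltac:(lia))). simpl in *. lra.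
Qed.

Lemma phi0_jumpR SR SL kR kL h y : injon SR kR -> SR h -> y < h ->
  phi0 SR SL kR kL y + (/2)^(kR h) <= phi0 SR SL kR kL h.
Proof.
  intros Hinj Sh Hyh. assert ((/2)^(kR h) <= phi0 SR SL kR kL h - phi0 SR SL kR kL y); [|lra].
  rewrite phi0_diff by lra. pose proof (atan_increasing y h Hyh).
  pose proof (Series_term _ (kR h) (dcc_b SR SL kR kL y h (Rlt_le _ _ Hyh))) as HT.
  set (T := Series _) in HT |- *. unfold cc in HT.
  rewrite (ind_1 (exists h0, SR h0 /\ kR h0 = kR h /\ h0 <= h)) in HT by (exists h; repeat split; auto; lra).
  rewrite (ind_0 (exists h0, SR h0 /\ kR h0 = kR h /\ h0 <= y)) in HT.
  2:{ intros [h0 [S0 [E0 L0]]]. rewrite (Hinj h0 h S0 Sh E0) in L0. lra. }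
  assert (ind (exists h0, SL h0 /\ kL h0 = kR h /\ h0 < y) <= ind (exists h0, SL h0 /\ kL h0 = kR h /\ h0 < h)).
  { apply ind_mono. intros [h0 [? [? ?]]]. exists h0. repeat split; auto; lra. }
  pose proof (pow_half_le1 (kR h)). nra.
Qed.

Lemma phi0_jumpL SR SL kR kL h y : injon SL kL -> SL h -> h < y ->
  phi0 SR SL kR kL h + (/2)^(kL h) <= phi0 SR SL kR kL y.
Proof.
  intros Hinj Sh Hyh. assert ((/2)^(kL h) <= phi0 SR SL kR kL y - phi0 SR SL kR kL h); [|lra].
  rewrite phi0_diff by lra. pose proof (atan_increasing h y Hyh).
  pose proof (Series_term _ (kL h) (dcc_b SR SL kR kL h y (Rlt_le _ _ Hyh))) as HT.
  set (T := Series _) in HT |- *. unfold cc in HT.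
  rewrite (ind_1 (exists h0, SL h0 /\ kL h0 = kL h /\ h0 < y)) in HT by (exists h; repeat split; auto; lra).
  rewrite (ind_0 (exists h0, SL h0 /\ kL h0 = kL h /\ h0 < h)) in HT.
  2:{ intros [h0 [S0 [E0 L0]]]. rewrite (Hinj h0 h S0 Sh E0) in L0. lra. }
  assert (ind (exists h0, SR h0 /\ kR h0 = kL h /\ h0 <= h) <= ind (exists h0, SR h0 /\ kR h0 = kL h /\ h0 <= y)).
  { apply ind_mono. intros [h0 [? [? ?]]]. exists h0. repeat split; auto; lra. }
  pose proof (pow_half_le1 (kL h)). nra.
Qed.

Definition special (SR SL : R -> Prop) (kR kL : R -> nat) n h := (SR h /\ kR h = n) \/ (SL h /\ kL h = n).

Lemma nospecial SR SL kR kL x N : injon SR kR -> injon SL kL ->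
  exists d, 0 < d /\ forall n h, (n < N)%nat -> special SR SL kR kL n h -> h <> x -> d <= Rabs (h - x).
Proof.
  intros IR IL. induction N as [|N [d [Hd IH]]].
  - exists 1. split; [lra|]. intros; lia.
  - assert (exists dR, 0 < dR /\ forall h, SR h -> kR h = N -> h <> x -> dR <= Rabs (h - x)) as [dR [HdR HR]].
    { destruct (classic (exists h, SR h /\ kR h = N /\ h <> x)) as [[h0 [S0 [E0 N0]]]|Hn].
      - exists (Rabs (h0 - x)). split. { apply Rabs_pos_lt. lra. }
        intros h Sh Eh _. rewrite (IR h h0 Sh S0 ltac:(congruence)). lra.
      - exists 1. split; [lra|]. intros h Sh Eh Nh. exfalso. apply Hn. exists h; auto. }
    assert (exists dL, 0 < dL /\ forall h, SL h -> kL h = N -> h <> x -> dL <= Rabs (h - x)) as [dL [HdL HL]].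
    { destruct (classic (exists h, SL h /\ kL h = N /\ h <> x)) as [[h0 [S0 [E0 N0]]]|Hn].
      - exists (Rabs (h0 - x)). split. { apply Rabs_pos_lt. lra. }
        intros h Sh Eh _. rewrite (IL h h0 Sh S0 ltac:(congruence)). lra.
      - exists 1. split; [lra|]. intros h Sh Eh Nh. exfalso. apply Hn. exists h; auto. }
    exists (Rmin d (Rmin dR dL)). split. { apply Rmin_glb_lt; auto. apply Rmin_glb_lt; auto. }
    intros n h Hn Hs Hx. pose proof (Rmin_l d (Rmin dR dL)). pose proof (Rmin_r d (Rmin dR dL)).
    pose proof (Rmin_l dR dL). pose proof (Rmin_r dR dL).
    destruct (Nat.eq_dec n N) as [->|Hne].
    + destruct Hs as [[S1 E1]|[S1 E1]]; [pose proof (HR h S1 E1 Hx)|pose proof (HL h S1 E1 Hx)]; lra.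
    + assert (n < N)%nat by lia. pose proof (IH n h H3 Hs Hx). lra.
Qed.

Lemma phi0_right SR SL kR kL x e : injon SR kR -> injon SL kL -> ~ SL x -> 0 < e ->
  exists d, 0 < d /\ forall y, x <= y < x + d -> phi0 SR SL kR kL y - phi0 SR SL kR kL x < e.
Proof.
  intros IR IL Hx He. destruct (atan_cont x (e/2)) as [da [Hda Ha]]; [lra|].
  destruct (small_pow (e/2)) as [N HN]; [lra|].
  destruct (nospecial SR SL kR kL x N IR IL) as [ds [Hds Hs]].
  exists (Rmin da ds). split; [apply Rmin_glb_lt; auto|].
  intros y Hy. pose proof (Rmin_l da ds). pose proof (Rmin_r da ds).
  rewrite phi0_diff by lra.
  assert (Rabs (atan y - atan x) < e/2) as HA. { apply Ha. rewrite Rabs_pos_eq; lra. }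
  apply Rabs_def2 in HA.
  pose proof (Series_tail _ N (dcc_b SR SL kR kL x y (proj1 Hy))) as HT.
  assert (Series (fun n => cc SR SL kR kL y n - cc SR SL kR kL x n) <= 4 * (/2)^N).
  { apply HT. intros n Hn. unfold cc.
    rewrite (ind_eq (exists h, SR h /\ kR h = n /\ h <= y) (exists h, SR h /\ kR h = n /\ h <= x)).
    rewrite (ind_eq (exists h, SL h /\ kL h = n /\ h < y) (exists h, SL h /\ kL h = n /\ h < x)). lra.
    - split; intros [h [S1 [E1 L1]]]; exists h; repeat split; auto; try lra.
      apply Rnot_le_lt. intros L2. assert (h <> x) by (intros ->; auto).
      pose proof (Hs n h Hn (or_intror (conj S1 E1)) H1). rewrite Rabs_pos_eq in H2; lra.
    - split; intros [h [S1 [E1 L1]]]; exists h; repeat split; auto; try lra.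
      apply Rnot_lt_le. intros L2. assert (h <> x) by (intros ->; lra).
      pose proof (Hs n h Hn (or_introl (conj S1 E1)) H1). rewrite Rabs_pos_eq in H2; lra. }
  lra.
Qed.

Lemma phi0_left SR SL kR kL x e : injon SR kR -> injon SL kL -> ~ SR x -> 0 < e ->
  exists d, 0 < d /\ forall y, x - d < y <= x -> phi0 SR SL kR kL x - phi0 SR SL kR kL y < e.
Proof.
  intros IR IL Hx He. destruct (atan_cont x (e/2)) as [da [Hda Ha]]; [lra|].
  destruct (small_pow (e/2)) as [N HN]; [lra|].
  destruct (nospecial SR SL kR kL x N IR IL) as [ds [Hds Hs]].
  exists (Rmin da ds). split; [apply Rmin_glb_lt; auto|].
  intros y Hy. pose proof (Rmin_l da ds). pose proof (Rmin_r da ds).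
  rewrite phi0_diff by lra.
  assert (Rabs (atan y - atan x) < e/2) as HA. { apply Ha. rewrite Rabs_left1; lra. }
  apply Rabs_def2 in HA.
  pose proof (Series_tail _ N (dcc_b SR SL kR kL y x (proj2 Hy))) as HT.
  assert (Series (fun n => cc SR SL kR kL x n - cc SR SL kR kL y n) <= 4 * (/2)^N).
  { apply HT. intros n Hn. unfold cc.
    rewrite (ind_eq (exists h, SR h /\ kR h = n /\ h <= y) (exists h, SR h /\ kR h = n /\ h <= x)).
    rewrite (ind_eq (exists h, SL h /\ kL h = n /\ h < y) (exists h, SL h /\ kL h = n /\ h < x)). lra.
    - split; intros [h [S1 [E1 L1]]]; exists h; repeat split; auto; try lra.
      apply Rnot_le_lt. intros L2. assert (h <> x) by lra.
      pose proof (Hs n h Hn (or_intror (conj S1 E1)) H1). rewrite Rabs_left1 in H2; lra.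
    - split; intros [h [S1 [E1 L1]]]; exists h; repeat split; auto; try lra.
      apply Rnot_lt_le. intros L2. assert (h <> x) by (intros ->; auto).
      pose proof (Hs n h Hn (or_introl (conj S1 E1)) H1). rewrite Rabs_left1 in H2; lra. }
  lra.
Qed.


Lemma RO_window tau h : in_calT tau -> locally_connected tau -> RO tau h -> ~ iso tau h ->
  exists d, 0 < d /\ forall h', RO tau h' -> h < h' -> h + d <= h'.
Proof.
  intros HT HL HR Hi. destruct HT as [Ht Hf] eqn:E.
  destruct (lc_nbhd tau _ h HT HL (top_full _ Ht) I Hi) as [V [HV [Vh [_ [Vc [y [Vy Hy]]]]]]].
  pose proof (conn_RO tau h V HT HR Vc Vh y Vy).
  exists (y - h). split; [lra|]. intros h' Hh' Hlt. apply Rnot_lt_le. intros Hc.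
  assert (V h') by (eapply (conn_interval tau V h y); eauto; lra).
  pose proof (conn_RO tau h' V HT Hh' Vc H0 h Vh). lra.
Qed.

Lemma LO_window tau h : in_calT tau -> locally_connected tau -> LO tau h -> ~ iso tau h ->
  exists d, 0 < d /\ forall h', LO tau h' -> h' < h -> h' <= h - d.
Proof.
  intros HT HL HR Hi. destruct HT as [Ht Hf] eqn:E.
  destruct (lc_nbhd tau _ h HT HL (top_full _ Ht) I Hi) as [V [HV [Vh [_ [Vc [y [Vy Hy]]]]]]].
  pose proof (conn_LO tau h V HT HR Vc Vh y Vy).
  exists (h - y). split; [lra|]. intros h' Hh' Hlt. apply Rnot_lt_le. intros Hc.
  assert (V h') by (eapply (conn_interval tau V y h); eauto; lra).
  pose proof (conn_LO tau h' V HT Hh' Vc H0 h Vh). lra.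
Qed.

Lemma kR_ex tau : in_calT tau -> locally_connected tau ->
  exists k, injon (fun h => RO tau h /\ ~ iso tau h) k.
Proof.
  intros HT HL.
  destruct (index_inj (fun h => RO tau h /\ ~ iso tau h)
     (fun h x => h < x /\ forall h', RO tau h' -> h < h' -> x < h')) as [k Hk].
  - intros h [HR Hi]. destruct (RO_window tau h HT HL HR Hi) as [d [Hd Hw]].
    exists h, (h + d). split; [lra|]. intros x Hx. split; [lra|]. intros h' H1 H2.
    pose proof (Hw h' H1 H2). lra.
  - intros h h' x [R1 _] [R2 _] [A1 B1] [A2 B2].
    destruct (Rtotal_order h h') as [c|[c|c]]; auto.
    + pose proof (B1 h' R2 c). lra.
    + pose proof (B2 h R1 c). lra.
  - exists k. exact Hk.
Qed.

Lemma kL_ex tau : in_calT tau -> locally_connected tau ->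
  exists k, injon (fun h => LO tau h /\ ~ iso tau h) k.
Proof.
  intros HT HL.
  destruct (index_inj (fun h => LO tau h /\ ~ iso tau h)
     (fun h x => x < h /\ forall h', LO tau h' -> h' < h -> h' < x)) as [k Hk].
  - intros h [HR Hi]. destruct (LO_window tau h HT HL HR Hi) as [d [Hd Hw]].
    exists (h - d), h. split; [lra|]. intros x Hx. split; [lra|]. intros h' H1 H2.
    pose proof (Hw h' H1 H2). lra.
  - intros h h' x [R1 _] [R2 _] [A1 B1] [A2 B2].
    destruct (Rtotal_order h h') as [c|[c|c]]; auto.
    + pose proof (B2 h R1 c). lra.
    + pose proof (B1 h' R2 c). lra.
  - exists k. exact Hk.
Qed.

Lemma cont_phi0 tau SR SL kR kL x e :
  in_calT tau -> locally_connected tau -> injon SR kR -> injon SL kL ->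
  (forall h, SR h <-> RO tau h /\ ~ iso tau h) -> (forall h, SL h <-> LO tau h /\ ~ iso tau h) ->
  ~ iso tau x -> 0 < e ->
  exists V, tau V /\ V x /\ forall y, V y -> ~ iso tau y /\ Rabs (phi0 SR SL kR kL y - phi0 SR SL kR kL x) < e.
Proof.
  intros HT HL IR IL ER EL Hi He.
  destruct (noniso_nbhd tau x HT HL Hi) as [V0 [HV0 [V0x [V0c V0i]]]].
  destruct (classic (RO tau x)) as [HR|HR]; [|destruct (classic (LO tau x)) as [HLo|HLo]].
  - assert (~ SL x) as HnL. { intros Hs. apply EL in Hs as [HLo _]. apply Hi. apply RO_LO_iso; auto. }
    destruct (phi0_right SR SL kR kL x e IR IL HnL He) as [d [Hd Hy]].
    exists (fun y => V0 y /\ x - 1 < y < x + d). split; [apply tinter; auto; apply open_itv; auto|].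
    split; [split; auto; lra|]. intros y [Vy Hyr]. split; auto.
    pose proof (conn_RO tau x V0 HT HR V0c V0x y Vy) as Hxy.
    pose proof (Hy y ltac:(lra)). pose proof (phi0_le SR SL kR kL x y Hxy).
    rewrite Rabs_pos_eq; lra.
  - assert (~ SR x) as HnR. { intros Hs. apply ER in Hs as [HR' _]. contradiction. }
    destruct (phi0_left SR SL kR kL x e IR IL HnR He) as [d [Hd Hy]].
    exists (fun y => V0 y /\ x - d < y < x + 1). split; [apply tinter; auto; apply open_itv; auto|].
    split; [split; auto; lra|]. intros y [Vy Hyr]. split; auto.
    pose proof (conn_LO tau x V0 HT HLo V0c V0x y Vy) as Hxy.
    pose proof (Hy y ltac:(lra)). pose proof (phi0_le SR SL kR kL y x Hxy).
    rewrite Rabs_left1; lra.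
  - assert (~ SR x) as HnR. { intros Hs. apply ER in Hs as [HR' _]. contradiction. }
    assert (~ SL x) as HnL. { intros Hs. apply EL in Hs as [HL' _]. contradiction. }
    destruct (phi0_left SR SL kR kL x e IR IL HnR He) as [d1 [Hd1 Hy1]].
    destruct (phi0_right SR SL kR kL x e IR IL HnL He) as [d2 [Hd2 Hy2]].
    exists (fun y => V0 y /\ x - Rmin d1 d2 < y < x + Rmin d1 d2).
    pose proof (Rmin_l d1 d2). pose proof (Rmin_r d1 d2).
    assert (0 < Rmin d1 d2) by (apply Rmin_glb_lt; auto).
    split; [apply tinter; auto; apply open_itv; auto|].
    split; [split; auto; lra|]. intros y [Vy Hyr]. split; auto.
    destruct (Rle_lt_dec x y) as [c|c].
    + pose proof (Hy2 y ltac:(lra)). pose proof (phi0_le SR SL kR kL x y c). rewrite Rabs_pos_eq; lra.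
    + pose proof (Hy1 y ltac:(lra)). pose proof (phi0_le SR SL kR kL y x (Rlt_le _ _ c)). rewrite Rabs_left1; lra.
Qed.

Lemma open_phi0 tau SR SL kR kL x U :
  in_calT tau -> locally_connected tau -> injon SR kR -> injon SL kL ->
  (forall h, SR h <-> RO tau h /\ ~ iso tau h) -> (forall h, SL h <-> LO tau h /\ ~ iso tau h) ->
  ~ iso tau x -> tau U -> U x ->
  exists l r, l < phi0 SR SL kR kL x < r /\ forall y, l < phi0 SR SL kR kL y < r -> U y.
Proof.
  intros HT HL IR IL ER EL Hi HU Ux.
  destruct (classic (RO tau x)) as [HR|HR]; [|destruct (classic (LO tau x)) as [HLo|HLo]].
  - destruct (RO_base tau x U HT HL HR Hi HU Ux) as [e [He HUe]].
    assert (SR x) as Sx by (apply ER; auto).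
    exists (phi0 SR SL kR kL x - (/2)^(kR x)), (phi0 SR SL kR kL (x + e/2)).
    pose proof (pow_half_le1 (kR x)). pose proof (phi0_strict SR SL kR kL x (x + e/2) ltac:(lra)).
    split; [lra|]. intros y [Hl Hr]. apply HUe. split.
    + apply Rnot_lt_le. intros c. pose proof (phi0_jumpR SR SL kR kL x y IR Sx c). lra.
    + apply Rnot_le_lt. intros c. assert (x + e/2 <= y) by lra. match goal with h: _ <= _ |- _ => pose proof (phi0_le SR SL kR kL _ _ h) end. lra.
  - destruct (LO_base tau x U HT HL HLo Hi HU Ux) as [e [He HUe]].
    assert (SL x) as Sx by (apply EL; auto).
    exists (phi0 SR SL kR kL (x - e/2)), (phi0 SR SL kR kL x + (/2)^(kL x)).
    pose proof (pow_half_le1 (kL x)). pose proof (phi0_strict SR SL kR kL (x - e/2) x ltac:(lra)).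
    split; [lra|]. intros y [Hl Hr]. apply HUe. split.
    + apply Rnot_le_lt. intros c. assert (y <= x - e/2) by lra. match goal with h: _ <= _ |- _ => pose proof (phi0_le SR SL kR kL _ _ h) end. lra.
    + apply Rnot_lt_le. intros c. pose proof (phi0_jumpL SR SL kR kL x y IL Sx c). lra.
  - destruct (E_base tau x U HT HL HR HLo Hi HU Ux) as [e [He HUe]].
    exists (phi0 SR SL kR kL (x - e/2)), (phi0 SR SL kR kL (x + e/2)).
    pose proof (phi0_strict SR SL kR kL (x - e/2) x ltac:(lra)).
    pose proof (phi0_strict SR SL kR kL x (x + e/2) ltac:(lra)).
    split; [lra|]. intros y [Hl Hr]. apply HUe. apply Rabs_def1.
    + apply Rnot_le_lt. intros c. assert (x + e/2 <= y) by lra. match goal with h: _ <= _ |- _ => pose proof (phi0_le SR SL kR kL _ _ h) end. lra.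
    + apply Rnot_le_lt. intros c. assert (y <= x - e/2) by lra. match goal with h: _ <= _ |- _ => pose proof (phi0_le SR SL kR kL _ _ h) end. lra.
Qed.

Lemma embed_main tau1 tau2 al be (g : R -> R) :
  in_calT tau1 -> locally_connected tau1 -> in_calT tau2 -> al < be ->
  (forall z W, al < z < be -> tau2 W -> W z -> exists e, 0 < e /\ forall y, Rabs (y - z) < e -> W y) ->
  (forall i j, iso tau1 i -> iso tau1 j -> g i = g j -> i = j) ->
  (forall i, iso tau1 i -> exists W, tau2 W /\ W (g i) /\ (forall z, al < z < be -> ~ W z) /\
        forall j, iso tau1 j -> W (g j) -> j = i) ->
  embeds_into tau1 tau2.
Proof.
  intros HT1 HL1 HT2 Hab HE Hg HW.
  destruct (kR_ex tau1 HT1 HL1) as [kR IR]. destruct (kL_ex tau1 HT1 HL1) as [kL IL].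
  set (SR := fun h => RO tau1 h /\ ~ iso tau1 h). set (SL := fun h => LO tau1 h /\ ~ iso tau1 h).
  assert (ER : forall h, SR h <-> RO tau1 h /\ ~ iso tau1 h) by (intros; unfold SR; tauto).
  assert (EL : forall h, SL h <-> LO tau1 h /\ ~ iso tau1 h) by (intros; unfold SL; tauto).
  set (s := (be - al) / 8). assert (Hs : 0 < s) by (unfold s; lra).
  set (phi := fun x => al + s * (phi0 SR SL kR kL x + 2)).
  assert (Hpb : forall x, al < phi x < be).
  { intros x. pose proof (phi0_bounds SR SL kR kL x). unfold phi. unfold s in *. split; nra. }
  assert (Hps : forall x y, x < y -> phi x < phi y).
  { intros x y Hxy. pose proof (phi0_strict SR SL kR kL x y Hxy). unfold phi. nra. }
  assert (HgW : forall i, iso tau1 i -> ~ (al < g i < be)).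
  { intros i Hi Hin. destruct (HW i Hi) as [W [_ [Wg [Wab _]]]]. exact (Wab _ Hin Wg). }
  set (f := fun x => if excluded_middle_informative (iso tau1 x) then g x else phi x).
  exists f. split; [|split].
  - intros x y. unfold f.
    destruct (excluded_middle_informative (iso tau1 x)) as [Hx|Hx];
    destruct (excluded_middle_informative (iso tau1 y)) as [Hy|Hy]; intros Hxy.
    + apply Hg; auto.
    + exfalso. apply (HgW x Hx). rewrite Hxy. apply Hpb.
    + exfalso. apply (HgW y Hy). rewrite <- Hxy. apply Hpb.
    + destruct (Rtotal_order x y) as [c|[c|c]]; auto; apply Hps in c; lra.
  - intros W HW2. apply open_local; auto. intros x Hx. unfold f in Hx.
    destruct (excluded_middle_informative (iso tau1 x)) as [Hi|Hi].
    + exists (fun y => y = x). split; auto. split; auto. intros y ->. unfold f.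
      destruct (excluded_middle_informative (iso tau1 x)); [auto|contradiction].
    + destruct (HE (phi x) W (Hpb x) HW2 Hx) as [e [He HWe]].
      destruct (cont_phi0 tau1 SR SL kR kL x (e / s) HT1 HL1 IR IL ER EL Hi) as [V [HV [Vx HVy]]].
      { apply Rdiv_lt_0_compat; auto. }
      exists V. split; auto. split; auto. intros y Vy. destruct (HVy y Vy) as [Hiy Hd].
      unfold f. destruct (excluded_middle_informative (iso tau1 y)); [contradiction|].
      apply HWe. unfold phi.
      replace (al + s * (phi0 SR SL kR kL y + 2) - (al + s * (phi0 SR SL kR kL x + 2)))
        with (s * (phi0 SR SL kR kL y - phi0 SR SL kR kL x)) by ring.
      rewrite Rabs_mult, Rabs_pos_eq by lra.
      apply Rmult_lt_reg_l with (/ s). apply Rinv_0_lt_compat; auto.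
      rewrite <- Rmult_assoc, Rinv_l by lra. rewrite Rmult_1_l.
      unfold Rdiv in Hd. rewrite Rmult_comm. auto.
  - intros U HU.
    assert (Hnb : forall x, U x -> exists N, tau2 N /\ N (f x) /\ forall y, N (f y) -> U y).
    { intros x Ux. unfold f at 1. destruct (excluded_middle_informative (iso tau1 x)) as [Hi|Hi].
      - destruct (HW x Hi) as [N [HN [Nx [Nab Ninj]]]]. exists N. split; auto. split; auto.
        intros y Ny. unfold f in Ny. destruct (excluded_middle_informative (iso tau1 y)) as [Hy|Hy].
        + rewrite (Ninj y Hy Ny). auto.
        + exfalso. exact (Nab _ (Hpb y) Ny).
      - destruct (open_phi0 tau1 SR SL kR kL x U HT1 HL1 IR IL ER EL Hi HU Ux) as [l [r [Hlr Hy]]].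
        exists (fun z => (al + s * (l + 2) < z < al + s * (r + 2)) /\ al < z < be).
        split. { apply tinter; auto; apply open_itv; auto. }
        split. { split; [|apply Hpb]. unfold phi. split; nra. }
        intros y [Ny Nab]. unfold f in Ny, Nab. destruct (excluded_middle_informative (iso tau1 y)) as [Hiy|Hiy].
        + exfalso. exact (HgW y Hiy Nab).
        + apply Hy. unfold phi in Ny. split; nra. }
    exists (fun z => exists x N, U x /\ tau2 N /\ N (f x) /\ (forall y, N (f y) -> U y) /\ N z).
    split.
    + apply open_local; auto. intros z [x [N [Ux [HN [Nx [NU Nz]]]]]]. exists N. split; auto. split; auto.
      intros y Ny. exists x, N. auto.
    + intros x. split.
      * intros Ux. destruct (Hnb x Ux) as [N [HN [Nx NU]]]. exists x, N. auto.
      * intros [x0 [N [_ [_ [_ [NU Nz]]]]]]. auto.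
Qed.


Lemma E_interval tau : in_calT tau -> locally_connected tau -> ~ discrete tau ->
  exists al be, al < be /\ forall z, al < z < be -> ~ iso tau z /\
     forall W, tau W -> W z -> exists e, 0 < e /\ forall y, Rabs (y - z) < e -> W y.
Proof.
  intros HT HL Hd. apply not_all_ex_not in Hd as [x0 Hx0].
  destruct HT as [Ht Hf] eqn:E.
  destruct (lc_nbhd tau _ x0 HT HL (top_full _ Ht) I Hx0) as [V [HV [Vx [_ [Vc [y [Vy Hy]]]]]]].
  assert (forall a b, a < b -> V a -> V b -> exists al be, al < be /\ forall z, al < z < be -> ~ iso tau z /\
     forall W, tau W -> W z -> exists e, 0 < e /\ forall y, Rabs (y - z) < e -> W y) as Hgen.
  { intros a b Hab Va Vb. exists a, b. split; auto. intros z Hz.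
    assert (Vz : V z) by (exact (conn_interval tau V a b z HT Vc Va Vb Hz)).
    assert (~ iso tau z) as Hiz. { intros Hi. pose proof (conn_iso tau V a z HT Vc Va Vz Hi). lra. }
    split; auto. intros W HW Wz. apply (E_base tau z W); auto.
    - intros HR. pose proof (conn_RO tau z V HT HR Vc Vz a Va). lra.
    - intros HLo. pose proof (conn_LO tau z V HT HLo Vc Vz b Vb). lra. }
  destruct (Rtotal_order x0 y) as [c|[c|c]]; [apply (Hgen x0 y); auto| congruence | apply (Hgen y x0); auto].
Qed.

Lemma half_lt2 a b : (a < b)%nat -> (/2)^b <= (/2)^a / 2.
Proof.
  intros H. replace b with (S a + (b - S a))%nat by lia. rewrite pow_add.
  pose proof (pow_half_le1 (b - S a)). pose proof (pow_half_le1 a). simpl. nra.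
Qed.

Lemma ball_open tau c r : in_calT tau -> tau (fun z => Rabs (z - c) < r).
Proof.
  intros HT. apply eopen; auto. intros x Hx. exists (r - Rabs (x - c)). split; [lra|].
  intros y Hy. pose proof (Rabs_triang (y - x) (x - c)). replace (y - x + (x - c)) with (y - c) in H by ring. lra.
Qed.

Lemma part_a tau1 tau2 : in_calT tau1 -> in_calT tau2 -> locally_connected tau1 -> locally_connected tau2 ->
  separable tau1 -> ~ discrete tau2 -> embeds_into tau1 tau2.
Proof.
  intros HT1 HT2 HL1 HL2 [D [[e He] HD]] Hnd.
  destruct (E_interval tau2 HT2 HL2 Hnd) as [al [be [Hab HE]]].
  set (m := (al + be) / 2).
  assert (Hk : forall i, exists n, iso tau1 i -> e n = i).
  { intros i. destruct (classic (iso tau1 i)) as [Hi|Hi].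
    - destruct (HD _ Hi (ex_intro _ i eq_refl)) as [x [-> Dx]]. destruct (He _ Dx) as [n Hn].
      exists n. auto.
    - exists 0%nat. intros; contradiction. }
  set (k := fun i => proj1_sig (constructive_indefinite_description _ (Hk i))).
  assert (Hke : forall i, iso tau1 i -> e (k i) = i).
  { intros i Hi. exact (proj2_sig (constructive_indefinite_description _ (Hk i)) Hi). }
  set (g := fun i => m + (be - m) * (/2)^(S (k i))).
  assert (Hsep : forall i j, k i <> k j -> (be - m) * (/2)^(S (k i)) / 2 <= Rabs (g j - g i)).
  { intros i j Hne. unfold g. assert (0 < be - m) by (unfold m; lra).
    replace (m + (be - m) * (/ 2) ^ S (k j) - (m + (be - m) * (/ 2) ^ S (k i)))
      with ((be - m) * ((/ 2) ^ S (k j) - (/ 2) ^ S (k i))) by ring.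
    rewrite Rabs_mult, (Rabs_pos_eq (be - m)) by lra.
    destruct (Nat.lt_gt_cases (k i) (k j)) as [[c|c] _]; auto.
    - pose proof (half_lt2 (S (k i)) (S (k j)) ltac:(lia)). pose proof (pow_half_le1 (S (k j))).
      rewrite Rabs_left1 by lra. nra.
    - pose proof (half_lt2 (S (k j)) (S (k i)) ltac:(lia)). pose proof (pow_half_le1 (S (k i))).
      rewrite Rabs_pos_eq by lra. nra. }
  apply (embed_main tau1 tau2 al m g HT1 HL1 HT2).
  - unfold m; lra.
  - intros z W Hz HW Wz. destruct (HE z ltac:(unfold m in *; lra)) as [_ HEz]. apply HEz; auto.
  - intros i j Hi Hj Hgij. rewrite <- (Hke i Hi), <- (Hke j Hj).
    destruct (Nat.eq_dec (k i) (k j)) as [E|E]; [rewrite E; auto|].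
    pose proof (Hsep i j E). rewrite Hgij, Rminus_diag, Rabs_R0 in H.
    pose proof (pow_half_le1 (S (k i))). assert (0 < be - m) by (unfold m; lra). nra.
  - intros i Hi. exists (fun z => Rabs (z - g i) < (be - m) * (/2)^(S (k i)) / 4).
    assert (0 < be - m) by (unfold m; lra). pose proof (pow_half_le1 (S (k i))).
    split; [apply ball_open; auto|]. split. { rewrite Rminus_diag, Rabs_R0. nra. }
    split.
    + intros z Hz Hb. apply Rabs_def2 in Hb. unfold g in Hb. nra.
    + intros j Hj Hb. destruct (Nat.eq_dec (k i) (k j)) as [E|E].
      * rewrite <- (Hke i Hi), <- (Hke j Hj), E. auto.
      * pose proof (Hsep i j E). nra.
Qed.


Definition big (A : R -> Prop) a b := ~ countable_set (fun x => A x /\ a < x < b).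

Lemma big_mono A a b a' b' : a' <= a -> b <= b' -> big A a b -> big A a' b'.
Proof.
  intros H1 H2 Hb Hc. apply Hb. eapply cnt_sub; [|exact Hc]. intros x [Ax Hx]. split; auto; lra.
Qed.

Lemma big_ne A a b : big A a b -> exists z, A z /\ a < z < b.
Proof.
  intros Hb. apply NNPP. intros Hn. apply Hb. exists (fun _ => 0). intros x Hx. exfalso. apply Hn. exists x; auto.
Qed.

Lemma not_big A a b : ~ big A a b -> countable_set (fun x => A x /\ a < x < b).
Proof. intros H. apply NNPP. exact H. Qed.

Lemma Lc A a b : big A a b -> exists x, a < x < b /\ forall r, 0 < r -> big A (x - r) (x + r).
Proof.
  intros Hb. apply NNPP. intros Hn. apply Hb.
  assert (H : forall x, a < x < b -> exists r, 0 < r /\ ~ big A (x - r) (x + r)).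
  { intros x Hx. apply NNPP. intros Hn2. apply Hn. exists x. split; auto. intros r Hr.
    apply NNPP. intros Hb2. apply Hn2. exists r; auto. }
  eapply cnt_sub; [|apply (cnt_union (fun i j => ~ big A (qs i) (qs j)) (fun i j x => A x /\ qs i < x < qs j))].
  - intros x [Ax Hx]. destruct (H x Hx) as [r [Hr Hnb]].
    destruct (qs_dense (x - r) x ltac:(lra)) as [i Hi]. destruct (qs_dense x (x + r) ltac:(lra)) as [j Hj].
    exists i, j. split; [|split; auto; lra].
    intros Hb2. apply Hnb. eapply big_mono; [| |exact Hb2]; lra.
  - intros i j Hij. apply not_big. auto.
Qed.

Lemma two_cond A a b x y : a < x -> x < y -> y < b ->
  (forall r, 0 < r -> big A (x - r) (x + r)) -> (forall r, 0 < r -> big A (y - r) (y + r)) ->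
  big A a ((x + y) / 2) /\ big A ((x + y) / 2) b.
Proof.
  intros H1 H2 H3 Hx Hy. split.
  - pose proof (Rmin_l (x - a) ((y - x) / 2)).
    pose proof (Rmin_r (x - a) ((y - x) / 2)). set (r := Rmin (x - a) ((y - x) / 2)) in *. assert (0 < r) by (apply Rmin_glb_lt; lra).
    eapply big_mono; [| |apply (Hx r)]; auto; fold r; lra.
  - pose proof (Rmin_l (b - y) ((y - x) / 2)).
    pose proof (Rmin_r (b - y) ((y - x) / 2)). set (r := Rmin (b - y) ((y - x) / 2)) in *. assert (0 < r) by (apply Rmin_glb_lt; lra).
    eapply big_mono; [| |apply (Hy r)]; auto; fold r; lra.
Qed.

Lemma Lsplit A a b : big A a b -> exists c, a < c < b /\ big A a c /\ big A c b.
Proof.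
  intros Hb. destruct (Lc A a b Hb) as [x [Hx Hxr]].
  destruct (classic (big A a x)) as [Ha|Ha]; [|destruct (classic (big A x b)) as [Hb'|Hb']].
  - destruct (Lc A a x Ha) as [y [Hy Hyr]]. exists ((y + x) / 2).
    destruct (two_cond A a b y x ltac:(lra) ltac:(lra) ltac:(lra) Hyr Hxr). split; auto. lra.
  - destruct (Lc A x b Hb') as [y [Hy Hyr]]. exists ((x + y) / 2).
    destruct (two_cond A a b x y ltac:(lra) ltac:(lra) ltac:(lra) Hxr Hyr). split; auto. lra.
  - exfalso. apply Hb. eapply cnt_sub; [|apply (cnt_union3 _ _ x (not_big _ _ _ Ha) (not_big _ _ _ Hb'))].
    intros z [Az Hz]. destruct (Rtotal_order z x) as [c|[c|c]]; [left|right;right|right;left]; try (split; [auto|lra]); auto.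
Qed.

Lemma Lsmall A a b e : big A a b -> 0 < e -> exists a' b', a < a' /\ a' < b' /\ b' < b /\ b' - a' < e /\ big A a' b'.
Proof.
  intros Hb He. destruct (Lc A a b Hb) as [x [Hx Hxr]].
  pose proof (Rmin_l (e / 3) (Rmin ((x - a) / 2) ((b - x) / 2))).
  pose proof (Rmin_r (e / 3) (Rmin ((x - a) / 2) ((b - x) / 2))).
  pose proof (Rmin_l ((x - a) / 2) ((b - x) / 2)). pose proof (Rmin_r ((x - a) / 2) ((b - x) / 2)).
  set (r := Rmin (e / 3) (Rmin ((x - a) / 2) ((b - x) / 2))) in *.
  assert (0 < r) by (apply Rmin_glb_lt; [lra|apply Rmin_glb_lt; lra]).
  exists (x - r), (x + r). repeat split; try lra. apply Hxr; auto.
Qed.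

Definition spec4 (A : R -> Prop) (a b e : R) (t : R * R * R * R) : Prop :=
  let '(a1, b1, a2, b2) := t in a < a1 /\ a1 < b1 /\ b1 < a2 /\ a2 < b2 /\ b2 < b /\
   b1 - a1 < e /\ b2 - a2 < e /\ big A a1 b1 /\ big A a2 b2 /\
   (exists z, A z /\ a < z < a1) /\ (exists z, A z /\ b2 < z < b).

Lemma spec4_ex A a b e : big A a b -> 0 < e -> exists t, spec4 A a b e t.
Proof.
  intros Hb He. destruct (Lsplit A a b Hb) as [c [Hc [Hac Hcb]]].
  destruct (Lsplit A a c Hac) as [c1 [Hc1 [H1 H2]]].
  destruct (Lsplit A c b Hcb) as [c2 [Hc2 [H3 H4]]].
  destruct (Lsmall A c1 c e H2 He) as [a1 [b1 [? [? [? [? ?]]]]]].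
  destruct (Lsmall A c c2 e H3 He) as [a2 [b2 [? [? [? [? ?]]]]]].
  destruct (big_ne A a c1 H1) as [z1 [Az1 Hz1]]. destruct (big_ne A c2 b H4) as [z2 [Az2 Hz2]].
  exists (a1, b1, a2, b2). simpl. repeat split; auto; try lra.
  - exists z1. split; auto; lra.
  - exists z2. split; auto; lra.
Qed.

Definition pick4 A (e : R) (s : R * R) : R * R * R * R :=
  epsilon (inhabits (0, 0, 0, 0)) (spec4 A (fst s) (snd s) e).

Definition child A (bit : bool) (e : R) (s : R * R) : R * R :=
  let '(a1, b1, a2, b2) := pick4 A e s in if bit then (a2, b2) else (a1, b1).

Lemma child_prop A bit e s : big A (fst s) (snd s) -> 0 < e ->
  fst s < fst (child A bit e s) /\ fst (child A bit e s) < snd (child A bit e s) /\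
  snd (child A bit e s) < snd s /\ snd (child A bit e s) - fst (child A bit e s) < e /\
  big A (fst (child A bit e s)) (snd (child A bit e s)) /\
  (exists z, A z /\ fst s < z < fst (child A bit e s)) /\ (exists z, A z /\ snd (child A bit e s) < z < snd s).
Proof.
  intros Hb He. pose proof (epsilon_spec (inhabits (0, 0, 0, 0)) (spec4 A (fst s) (snd s) e)
    (spec4_ex A (fst s) (snd s) e Hb He)) as Hs. fold (pick4 A e s) in Hs.
  unfold child. destruct (pick4 A e s) as [[[a1 b1] a2] b2]. simpl in Hs.
  destruct Hs as [? [? [? [? [? [? [? [? [? [[z1 [? ?]] [z2 [? ?]]]]]]]]]]]].
  destruct bit; simpl; repeat split; auto; try lra.
  - exists z1. split; auto; lra.
  - exists z2. split; auto; lra.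
  - exists z1. split; auto; lra.
  - exists z2. split; auto; lra.
Qed.

Lemma child_sep A e s : big A (fst s) (snd s) -> 0 < e ->
  snd (child A false e s) < fst (child A true e s).
Proof.
  intros Hb He. pose proof (epsilon_spec (inhabits (0, 0, 0, 0)) (spec4 A (fst s) (snd s) e)
    (spec4_ex A (fst s) (snd s) e Hb He)) as Hs. fold (pick4 A e s) in Hs.
  unfold child. destruct (pick4 A e s) as [[[a1 b1] a2] b2]. simpl in Hs. simpl. tauto.
Qed.

Fixpoint st A (s0 : R * R) (sg : nat -> bool) (n : nat) : R * R :=
  match n with 0%nat => s0 | S n => child A (sg n) ((/2)^n) (st A s0 sg n) end.

Lemma st_big A s0 sg n : big A (fst s0) (snd s0) -> big A (fst (st A s0 sg n)) (snd (st A s0 sg n)).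
Proof.
  intros H0. induction n; simpl; auto.
  pose proof (pow_half_le1 n). apply (child_prop A (sg n) ((/2)^n) _ IHn ltac:(lra)).
Qed.

Lemma st_step A s0 sg n : big A (fst s0) (snd s0) ->
  fst (st A s0 sg n) < fst (st A s0 sg (S n)) /\ fst (st A s0 sg (S n)) < snd (st A s0 sg (S n)) /\
  snd (st A s0 sg (S n)) < snd (st A s0 sg n) /\ snd (st A s0 sg (S n)) - fst (st A s0 sg (S n)) < (/2)^n /\
  (exists z, A z /\ fst (st A s0 sg n) < z < fst (st A s0 sg (S n))) /\
  (exists z, A z /\ snd (st A s0 sg (S n)) < z < snd (st A s0 sg n)).
Proof.
  intros H0. pose proof (st_big A s0 sg n H0). pose proof (pow_half_le1 n). simpl.
  destruct (child_prop A (sg n) ((/2)^n) (st A s0 sg n) H ltac:(lra)) as [? [? [? [? [? [? ?]]]]]].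
  repeat split; auto.
Qed.

Lemma st_mono A s0 sg n m : big A (fst s0) (snd s0) -> (n <= m)%nat ->
  fst (st A s0 sg n) <= fst (st A s0 sg m) /\ snd (st A s0 sg m) <= snd (st A s0 sg n).
Proof.
  intros H0 Hnm. induction Hnm; [lra|].
  destruct (st_step A s0 sg m H0) as [? [? [? _]]]. lra.
Qed.

Lemma st_ab A s0 sg n m : big A (fst s0) (snd s0) -> fst (st A s0 sg n) < snd (st A s0 sg m).
Proof.
  intros H0. destruct (st_mono A s0 sg n (Nat.max n m) H0 ltac:(lia)) as [H1 _].
  destruct (st_mono A s0 sg m (Nat.max n m) H0 ltac:(lia)) as [_ H2].
  destruct (st_step A s0 sg (Nat.max n m) H0) as [? [? [? _]]].
  destruct (st_mono A s0 sg (Nat.max n m) (S (Nat.max n m)) H0 ltac:(lia)). lra.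
Qed.

Definition pt A s0 sg : R := epsilon (inhabits 0) (fun p => is_lub (fun x => exists n, x = fst (st A s0 sg n)) p).

Lemma pt_prop A s0 sg : big A (fst s0) (snd s0) ->
  forall n, fst (st A s0 sg n) <= pt A s0 sg <= snd (st A s0 sg n).
Proof.
  intros H0. assert (Hex : exists p, is_lub (fun x => exists n, x = fst (st A s0 sg n)) p).
  { destruct (completeness (fun x => exists n, x = fst (st A s0 sg n))) as [p Hp].
    - exists (snd (st A s0 sg 0)). intros x [n ->]. left. apply st_ab; auto.
    - exists (fst (st A s0 sg 0)), 0%nat. auto.
    - exists p; auto. }
  pose proof (epsilon_spec (inhabits 0) _ Hex) as [Hub Hl]. fold (pt A s0 sg) in Hub, Hl.
  intros n. split.
  - apply Hub. exists n; auto.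
  - apply Hl. intros x [k ->]. left. apply st_ab; auto.
Qed.

Lemma pt_iso tau s0 sg : in_calT tau -> locally_connected tau -> big (iso tau) (fst s0) (snd s0) ->
  iso tau (pt (iso tau) s0 sg).
Proof.
  intros HT HL H0. set (A := iso tau) in *. set (p := pt A s0 sg).
  pose proof (pt_prop A s0 sg H0) as Hp. fold p in Hp.
  apply NNPP. intros Hi. destruct HT as [Ht Hf] eqn:E.
  destruct (lc_nbhd tau _ p HT HL (top_full _ Ht) I Hi) as [V [HV [Vp [_ [Vc [y [Vy Hy]]]]]]].
  destruct (Rtotal_order y p) as [c|[c|c]]; [| congruence |].
  - destruct (small_pow (p - y)) as [k Hk]; [lra|]. pose proof (pow_half_le1 k).
    destruct (st_step A s0 sg k H0) as [_ [_ [_ [Hl _]]]].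
    destruct (st_step A s0 sg (S k) H0) as [_ [_ [_ [_ [[z [Az Hz]] _]]]]].
    pose proof (Hp (S k)). pose proof (Hp (S (S k))).
    assert (V z) by (exact (conn_interval tau V y p z HT Vc Vy Vp ltac:(lra))).
    pose proof (conn_iso tau V p z HT Vc Vp H3 Az). lra.
  - destruct (small_pow (y - p)) as [k Hk]; [lra|]. pose proof (pow_half_le1 k).
    destruct (st_step A s0 sg k H0) as [_ [_ [_ [Hl _]]]].
    destruct (st_step A s0 sg (S k) H0) as [_ [_ [_ [_ [_ [z [Az Hz]]]]]]].
    pose proof (Hp (S k)). pose proof (Hp (S (S k))).
    assert (V z) by (exact (conn_interval tau V p y z HT Vc Vp Vy ltac:(lra))).
    pose proof (conn_iso tau V p z HT Vc Vp H3 Az). lra.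
Qed.

Lemma st_prefix A s0 sg sg' k : (forall j, (j < k)%nat -> sg j = sg' j) -> st A s0 sg k = st A s0 sg' k.
Proof.
  induction k; intros H; simpl; auto. rewrite IHk by (intros; apply H; lia). rewrite H by lia. auto.
Qed.

Lemma first_diff (sg sg' : nat -> bool) n : (forall j, (j < n)%nat -> sg j = sg' j) \/
  exists k, (k < n)%nat /\ (forall j, (j < k)%nat -> sg j = sg' j) /\ sg k <> sg' k.
Proof.
  induction n. { left. intros; lia. }
  destruct IHn as [H|[k [? ?]]].
  - destruct (Bool.bool_dec (sg n) (sg' n)) as [E|E].
    + left. intros j Hj. destruct (Nat.eq_dec j n) as [->|]; auto. apply H; lia.
    + right. exists n. split; auto.
  - right. exists k. split; auto.
Qed.

Lemma pt_inj A s0 sg sg' : big A (fst s0) (snd s0) -> pt A s0 sg = pt A s0 sg' -> forall n, sg n = sg' n.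
Proof.
  intros H0 Heq n. apply NNPP. intros Hn.
  destruct (first_diff sg sg' (S n)) as [H|[k [Hk [Hpre Hd]]]]; [apply Hn, H; lia|].
  pose proof (st_prefix A s0 sg sg' k Hpre) as Es.
  pose proof (st_big A s0 sg k H0) as Hb.
  assert (0 < (/2)^k) by apply pow_half_le1.
  pose proof (pt_prop A s0 sg H0 (S k)) as P1. pose proof (pt_prop A s0 sg' H0 (S k)) as P2.
  simpl in P1, P2. rewrite <- Es in P2.
  pose proof (child_sep A ((/2)^k) (st A s0 sg k) Hb H).
  destruct (sg k) eqn:E1; destruct (sg' k) eqn:E2; try congruence; lra.
Qed.

Lemma nonsep_big tau : in_calT tau -> locally_connected tau -> ~ separable tau ->
  exists a b, big (iso tau) a b.
Proof.
  intros HT HL Hns. apply NNPP. intros Hn. apply Hns.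
  assert (Hc : countable_set (iso tau)).
  { eapply cnt_sub; [|apply (cnt_union (fun i j => True) (fun i j x => iso tau x /\ - INR i < x < INR i))].
    - intros x Hx. destruct (INR_unbounded (Rabs x)) as [i Hi]. exists i, 0%nat. split; auto.
      split; auto. assert (Rabs x < INR i) as Hr by lra. apply Rabs_def2 in Hr. lra.
    - intros i j _. apply not_big. intros Hb. apply Hn. exists (- INR i), (INR i). auto. }
  exists (fun x => iso tau x \/ (exists n, qs n = x) \/ x = 0). split.
  - apply cnt_union3; auto. exists qs. intros x [n Hn0]. exists n; auto.
  - intros U HU [x Ux]. destruct (classic (iso tau x)) as [Hi|Hi]; [exists x; auto|].
    destruct (lc_nbhd tau U x HT HL HU Ux Hi) as [V [HV [Vx [VU [Vc [y [Vy Hy]]]]]]].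
    destruct (Rtotal_order x y) as [c|[c|c]]; [| congruence |].
    + destruct (qs_dense x y c) as [n Hq]. exists (qs n). split; [|right; left; exists n; auto].
      apply VU. exact (conn_interval tau V x y _ HT Vc Vx Vy Hq).
    + destruct (qs_dense y x c) as [n Hq]. exists (qs n). split; [|right; left; exists n; auto].
      apply VU. exact (conn_interval tau V y x _ HT Vc Vy Vx Hq).
Qed.

Lemma nonsep_inj tau : in_calT tau -> locally_connected tau -> ~ separable tau ->
  exists G : R -> R, (forall x y, G x = G y -> x = y) /\ forall x, iso tau (G x).
Proof.
  intros HT HL Hns. destruct (nonsep_big tau HT HL Hns) as [a [b Hb]].
  set (s0 := (a, b)).
  exists (fun x => pt (iso tau) s0 (fun n => if Rlt_dec (qs n) x then true else false)). split.
  - intros x y Heq. pose proof (pt_inj _ s0 _ _ Hb Heq) as Hs.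
    destruct (Rtotal_order x y) as [c|[c|c]]; auto; exfalso.
    + destruct (qs_dense x y c) as [n Hn]. specialize (Hs n). cbv beta in Hs.
      destruct (Rlt_dec (qs n) x); destruct (Rlt_dec (qs n) y); try discriminate; lra.
    + destruct (qs_dense y x c) as [n Hn]. specialize (Hs n). cbv beta in Hs.
      destruct (Rlt_dec (qs n) x); destruct (Rlt_dec (qs n) y); try discriminate; lra.
  - intros x. apply pt_iso; auto.
Qed.

Lemma part_b tau1 tau2 : in_calT tau1 -> in_calT tau2 -> locally_connected tau1 -> locally_connected tau2 ->
  ~ separable tau2 -> ~ discrete tau2 -> embeds_into tau1 tau2.
Proof.
  intros HT1 HT2 HL1 HL2 Hns Hnd.
  destruct (E_interval tau2 HT2 HL2 Hnd) as [al [be [Hab HE]]].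
  destruct (nonsep_inj tau2 HT2 HL2 Hns) as [G [HG HGi]].
  apply (embed_main tau1 tau2 al be G HT1 HL1 HT2 Hab).
  - intros z W Hz HW Wz. apply (proj2 (HE z Hz)); auto.
  - intros i j _ _. apply HG.
  - intros i Hi. exists (fun y => y = G i). split; [apply HGi|]. split; auto. split.
    + intros z Hz ->. apply (proj1 (HE _ Hz)). apply HGi.
    + intros j _ Hj. apply HG; auto.
Qed.

Theorem proposition3 (tau1 tau2 : (R -> Prop) -> Prop) :
  in_calT tau1 -> in_calT tau2 ->
  locally_connected tau1 -> locally_connected tau2 ->
  (separable tau1 -> ~ discrete tau2 -> embeds_into tau1 tau2) /\
  (~ separable tau2 -> ~ discrete tau2 -> embeds_into tau1 tau2).
Proof.
  intros HT1 HT2 HL1 HL2. split.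
  - apply part_a; auto.
  - apply part_b; auto.
Qed.
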